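(* Let $x^\dagger$ be an $\mathcal R$-minimizing solution of $F(x)=y$ satisfying Assumption (A1) below with constants $\xi^\dagger$, $\beta$, $\varphi$, $\rho$. Let $\tilde y\in Y$ be noisy data with noise level $\delta:=\|\tilde y-y\|$, write $\tilde x_\alpha:=x_\alpha(\tilde y)$, and let $\alpha_*\in\Delta_q$ be a global minimizer of $\alpha\mapsto\Theta(\alpha,\tilde y)$ over $\Delta_q$ (Rule HR). Assume $\tilde x_{\alpha_*}\in\mathcal M_\rho$ and $\delta_*:=\|F(\tilde x_{\alpha_*})-\tilde y\|\neq 0$. Then $$D_{\xi^\dagger}\mathcal R(\tilde x_{\alpha_*},x^\dagger)\le C\Big(1+\frac{\delta^r}{\delta_*^r}\Big)\big(\delta^r+\varphi(\delta+\delta_* )\big),$$ where $C$ is a constant depending only on $\alpha_0$, $q$, $r$ and $\beta$.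
   Context: Standing setting: $X$ and $Y$ are reflexive Banach spaces (both norms written $\|\cdot\|$; $X^*$ is the dual of $X$ and $\langle\cdot,\cdot\rangle$ the duality pairing). $F:\mathcal D(F)\subset X\to Y$ is weakly closed, and $\mathcal R:X\to[0,\infty]$ is proper, lower semicontinuous and convex. A fixed exponent $1<r<\infty$ is given. The equation $F(x)=y$ (exact data $y\in Y$) has a solution in $\mathcal D(\mathcal R)=\{\mathcal R<\infty\}$, and for every $\alpha>0$ and every $z\in Y$ the functional $x\mapsto \|F(x)-z\|^r+\alpha\mathcal R(x)$ on $\mathcal D(F)$ is coercive. An $\mathcal R$-minimizing solution is a solution $x^\dagger$ of $F(x)=y$ with $\mathcal R(x^\dagger)=\min\{\mathcal R(x):x\in\mathcal D(F),F(x)=y\}$. For $z\in Y$ and $\alpha>0$, $x_\alpha(z)$ denotes a (fixed) minimizer of $\|F(x)-z\|^r+\alpha\mathcal R(x)$ over $x\in\mathcal D(F)$. $\partial\mathcal R(x)=\{\xi\in X^*:\mathcal R(\bar x)\ge\mathcal R(x)+\langle\xi,\bar x-x\rangle\ \forall\bar x\in X\}$, and for $\xi\in\partial\mathcal R(x)$ the Bregman distance is $D_\xi\mathcal R(\bar x,x)=\mathcal R(\bar x)-\mathcal R(x)-\langle\xi,\bar x-x\rangle$. For $\rho>0$, $\mathcal M_\rho:=\{x\in\mathcal D(F):\mathcal R(x)<\rho\}$. Rule HR: fix $\alpha_0>0$ and $0<q<1$, let $\Delta_q=\{\alpha_0q^j:j=0,1,2,\dots\}$ and for data $z$ set $\Theta(\alpha,z)=\|F(x_\alpha(z))-z\|^r/\alpha$.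 An index function is a continuous strictly increasing $\varphi:[0,\infty)\to[0,\infty)$ with $\varphi(0)=0$. Assumption (A1): $\partial\mathcal R(x^\dagger)\ne\emptyset$ and there exist $\xi^\dagger\in\partial\mathcal R(x^\dagger)$, $0\le\beta<1$, a concave index function $\varphi$ and $\rho>\mathcal R(x^\dagger)$ such that $\langle\xi^\dagger,x^\dagger-x\rangle\le\beta D_{\xi^\dagger}\mathcal R(x,x^\dagger)+\varphi(\|F(x)-F(x^\dagger)\|)$ for all $x\in\mathcal M_\rho$. *)

(* Defs.v *)
From Stdlib Require Import Reals.
Open Scope R_scope.

Record NormedSpace := mkNS {
  car :> Type;
  nzero : car;
  nadd : car -> car -> car;
  nopp : car -> car;
  nscal : R -> car -> car;
  nnorm : car -> R;
  ax_add_assoc : forall x y z, nadd x (nadd y z) = nadd (nadd x y) z;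
  ax_add_comm : forall x y, nadd x y = nadd y x;
  ax_add_0 : forall x, nadd x nzero = x;
  ax_add_opp : forall x, nadd x (nopp x) = nzero;
  ax_scal_assoc : forall a b x, nscal a (nscal b x) = nscal (a * b) x;
  ax_scal_1 : forall x, nscal 1 x = x;
  ax_scal_distr_l : forall a x y, nscal a (nadd x y) = nadd (nscal a x) (nscal a y);
  ax_scal_distr_r : forall a b x, nscal (a + b) x = nadd (nscal a x) (nscal b x);
  ax_norm_eq0 : forall x, nnorm x = 0 -> x = nzero;
  ax_norm_scal : forall a x, nnorm (nscal a x) = Rabs a * nnorm x;
  ax_norm_triangle : forall x y, nnorm (nadd x y) <= nnorm x + nnorm y
}.
Arguments nzero {_}.
Arguments nadd {_} _ _.
Arguments nopp {_} _.
Arguments nscal {_} _ _.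
Arguments nnorm {_} _.

Definition nsub {X : NormedSpace} (x y : X) : X := nadd x (nopp y).

Definition strong_cv {X : NormedSpace} (u : nat -> X) (x : X) : Prop :=
  Un_cv (fun n => nnorm (nsub (u n) x)) 0.

Definition is_Banach (X : NormedSpace) : Prop :=
  forall u : nat -> X,
    (forall eps, eps > 0 -> exists N, forall m n, (N <= m)%nat -> (N <= n)%nat ->
        nnorm (nsub (u m) (u n)) < eps) ->
    exists l, strong_cv u l.

(** Elements of the dual X^*: bounded linear functionals; <f, x> = f x. *)
Definition is_dual {X : NormedSpace} (f : X -> R) : Prop :=
  (forall x y, f (nadd x y) = f x + f y) /\
  (forall a x, f (nscal a x) = a * f x) /\
  (exists M, forall x, Rabs (f x) <= M * nnorm x).

(** Reflexivity: every bounded linear functional on X^* is evaluation at a point.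
    Boundedness of Phi w.r.t. the dual norm: |Phi f| <= M K whenever K bounds f. *)
Definition reflexive (X : NormedSpace) : Prop :=
  forall Phi : (X -> R) -> R,
    (forall f g, is_dual f -> is_dual g -> Phi (fun x => f x + g x) = Phi f + Phi g) ->
    (forall a f, is_dual f -> Phi (fun x => a * f x) = a * Phi f) ->
    (exists M, forall f K, is_dual f -> 0 <= K ->
        (forall x, Rabs (f x) <= K * nnorm x) -> Rabs (Phi f) <= M * K) ->
    exists x : X, forall f, is_dual f -> Phi f = f x.

Definition weak_cv {X : NormedSpace} (u : nat -> X) (x : X) : Prop :=
  forall f, is_dual f -> Un_cv (fun n => f (u n)) (f x).

Definition weakly_closed {X Y : NormedSpace} (DF : X -> Prop) (F : X -> Y) : Prop :=
  forall (u : nat -> X) (x : X) (z : Y),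
    (forall n, DF (u n)) -> weak_cv u x -> weak_cv (fun n => F (u n)) z ->
    DF x /\ F x = z.

Inductive ERbar := Fin : R -> ERbar | PInf : ERbar.

Definition ext_le (a b : ERbar) : Prop :=
  match a, b with
  | _, PInf => True
  | PInf, Fin _ => False
  | Fin x, Fin y => x <= y
  end.

Definition ext_lt_R (a : ERbar) (c : R) : Prop :=
  match a with Fin x => x < c | PInf => False end.

Definition ext_add (a b : ERbar) : ERbar :=
  match a, b with Fin x, Fin y => Fin (x + y) | _, _ => PInf end.

(** scaling by a nonnegative real, with 0 * oo = 0 *)
Definition ext_scal (t : R) (a : ERbar) : ERbar :=
  match a with
  | Fin x => Fin (t * x)
  | PInf => if Req_EM_T t 0 then Fin 0 else PInf
  end.

(** power a^p for a >= 0 with 0^p = 0 (p > 0). *)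
Definition rpow (a p : R) : R :=
  match Rle_lt_dec a 0 with left _ => 0 | right _ => Rpower a p end.

Definition R_nonneg {X : NormedSpace} (Rf : X -> ERbar) : Prop :=
  forall x, match Rf x with Fin a => 0 <= a | PInf => True end.
Definition R_proper {X : NormedSpace} (Rf : X -> ERbar) : Prop :=
  exists x, Rf x <> PInf.
Definition R_lsc {X : NormedSpace} (Rf : X -> ERbar) : Prop :=
  forall (c : R) (u : nat -> X) (x : X),
    strong_cv u x -> (forall n, ext_le (Rf (u n)) (Fin c)) -> ext_le (Rf x) (Fin c).
Definition R_convex {X : NormedSpace} (Rf : X -> ERbar) : Prop :=
  forall x y t a b, 0 < t < 1 -> Rf x = Fin a -> Rf y = Fin b ->
    ext_le (Rf (nadd (nscal t x) (nscal (1 - t) y))) (Fin (t * a + (1 - t) * b)).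

Definition tik {X Y : NormedSpace} (F : X -> Y) (Rf : X -> ERbar) (r alpha : R) (z : Y)
  (x : X) : ERbar :=
  ext_add (Fin (rpow (nnorm (nsub (F x) z)) r)) (ext_scal alpha (Rf x)).

Definition is_minimizer {X Y : NormedSpace} (DF : X -> Prop) (F : X -> Y) (Rf : X -> ERbar)
  (r alpha : R) (z : Y) (x : X) : Prop :=
  DF x /\ forall x', DF x' -> ext_le (tik F Rf r alpha z x) (tik F Rf r alpha z x').

Definition coercive_tik {X Y : NormedSpace} (DF : X -> Prop) (F : X -> Y) (Rf : X -> ERbar)
  (r : R) : Prop :=
  forall alpha (z : Y), 0 < alpha ->
    forall M, exists K, forall x, DF x -> K <= nnorm x -> ext_le (Fin M) (tik F Rf r alpha z x).

(** Standing setting. xa alpha z is the fixed minimizer x_alpha(z). *)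
Definition standing (X Y : NormedSpace) (DF : X -> Prop) (F : X -> Y) (Rf : X -> ERbar)
  (r : R) (y : Y) (xa : R -> Y -> X) : Prop :=
  is_Banach X /\ reflexive X /\ is_Banach Y /\ reflexive Y /\
  weakly_closed DF F /\
  R_nonneg Rf /\ R_proper Rf /\ R_lsc Rf /\ R_convex Rf /\
  1 < r /\
  (exists x, DF x /\ F x = y /\ Rf x <> PInf) /\
  coercive_tik DF F Rf r /\
  (forall alpha z, 0 < alpha -> is_minimizer DF F Rf r alpha z (xa alpha z)).

Definition R_minimizing {X Y : NormedSpace} (DF : X -> Prop) (F : X -> Y) (Rf : X -> ERbar)
  (y : Y) (xd : X) : Prop :=
  DF xd /\ F xd = y /\ forall x, DF x -> F x = y -> ext_le (Rf xd) (Rf x).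

Definition subdiff {X : NormedSpace} (Rf : X -> ERbar) (x : X) (xi : X -> R) : Prop :=
  is_dual xi /\ forall xb, ext_le (ext_add (Rf x) (Fin (xi (nsub xb x)))) (Rf xb).

Definition bregman {X : NormedSpace} (Rf : X -> ERbar) (xi : X -> R) (xb x : X) : ERbar :=
  match Rf xb, Rf x with
  | Fin a, Fin b => Fin (a - b - xi (nsub xb x))
  | _, _ => PInf
  end.

Definition M_rho {X : NormedSpace} (DF : X -> Prop) (Rf : X -> ERbar) (rho : R) (x : X) : Prop :=
  DF x /\ ext_lt_R (Rf x) rho.

Definition index_function (phi : R -> R) : Prop :=
  phi 0 = 0 /\
  (forall t, 0 <= t -> 0 <= phi t) /\
  (forall s t, 0 <= s -> s < t -> phi s < phi t) /\
  (forall t, 0 <= t -> limit1_in phi (fun s => 0 <= s) (phi t) t).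

Definition concave_on_nonneg (phi : R -> R) : Prop :=
  forall s t l, 0 <= s -> 0 <= t -> 0 <= l <= 1 ->
    l * phi s + (1 - l) * phi t <= phi (l * s + (1 - l) * t).

Definition assumption_A1 {X Y : NormedSpace} (DF : X -> Prop) (F : X -> Y) (Rf : X -> ERbar)
  (xd : X) (xi : X -> R) (beta : R) (phi : R -> R) (rho : R) : Prop :=
  subdiff Rf xd xi /\ 0 <= beta < 1 /\ index_function phi /\ concave_on_nonneg phi /\
  ext_lt_R (Rf xd) rho /\
  forall x, M_rho DF Rf rho x ->
    ext_le (Fin (xi (nsub xd x)))
           (ext_add (ext_scal beta (bregman Rf xi x xd)) (Fin (phi (nnorm (nsub (F x) (F xd)))))).

Definition Theta {X Y : NormedSpace} (F : X -> Y) (xa : R -> Y -> X) (r alpha : R) (z : Y) : R :=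
  rpow (nnorm (nsub (F (xa alpha z)) z)) r / alpha.

Definition HR_choice {X Y : NormedSpace} (F : X -> Y) (xa : R -> Y -> X) (r alpha0 q : R)
  (z : Y) (astar : R) : Prop :=
  (exists j : nat, astar = alpha0 * q ^ j) /\
  forall k : nat, Theta F xa r astar z <= Theta F xa r (alpha0 * q ^ k) z.

(* Main.v *)
Require Import Defs.
From Stdlib Require Import Reals Lra Psatz Lia.
Open Scope R_scope.

Lemma rpow_nonneg a p : 0 <= rpow a p.
Proof. unfold rpow; destruct (Rle_lt_dec a 0); [lra|]. unfold Rpower; left; apply exp_pos. Qed.

Lemma rpow_le0 a p : a <= 0 -> rpow a p = 0.
Proof. intros; unfold rpow; destruct (Rle_lt_dec a 0); [lra|lra]. Qed.

Lemma rpow_posE a p : 0 < a -> rpow a p = Rpower a p.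
Proof. intros; unfold rpow; destruct (Rle_lt_dec a 0); [lra|reflexivity]. Qed.

Lemma rpow_mono a b p : 0 < p -> 0 <= a <= b -> rpow a p <= rpow b p.
Proof.
  intros Hp [H1 H2]. destruct (Req_dec a 0).
  - rewrite rpow_le0 by lra. apply rpow_nonneg.
  - rewrite !rpow_posE by lra. apply Rle_Rpower_l; lra.
Qed.

Lemma rpow_2 d p : 0 <= d -> rpow (2 * d) p = Rpower 2 p * rpow d p.
Proof.
  intros H. destruct (Req_dec d 0).
  - subst. rewrite Rmult_0_r, !rpow_le0 by lra. ring.
  - rewrite !rpow_posE by lra. rewrite Rpower_mult_distr; lra.
Qed.

Lemma rpow_split x r : 0 < x -> rpow x r = x * Rpower x (r - 1).
Proof.
  intros H. rewrite rpow_posE by lra.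
  replace r with (1 + (r - 1)) at 1 by ring. rewrite Rpower_plus, Rpower_1; auto.
Qed.

Lemma Rpower_pos x y : 0 < Rpower x y.
Proof. unfold Rpower; apply exp_pos. Qed.

Section NS.
Variable X : NormedSpace.
Implicit Types x y z : X.

Lemma add0l x : nadd nzero x = x.
Proof. rewrite ax_add_comm, ax_add_0; reflexivity. Qed.

Lemma opp_unique a x : nadd a x = nzero -> a = nopp x.
Proof.
  intros H. rewrite <- (ax_add_0 _ a), <- (ax_add_opp _ x), ax_add_assoc, H, add0l. reflexivity.
Qed.

Lemma scal0 x : nscal 0 x = nzero.
Proof.
  assert (H : nscal 0 x = nadd (nscal 0 x) (nscal 0 x)).
  { rewrite <- ax_scal_distr_r. f_equal; ring. }
  rewrite <- (ax_add_opp _ (nscal 0 x)).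
  transitivity (nadd (nadd (nscal 0 x) (nscal 0 x)) (nopp (nscal 0 x))).
  - rewrite <- ax_add_assoc, ax_add_opp, ax_add_0. reflexivity.
  - rewrite <- H. reflexivity.
Qed.

Lemma opp_scal x : nopp x = nscal (-1) x.
Proof.
  symmetry; apply opp_unique. rewrite <- (ax_scal_1 _ x) at 2.
  rewrite <- ax_scal_distr_r. replace (-1 + 1) with 0 by ring. apply scal0.
Qed.

Lemma norm_opp x : nnorm (nopp x) = nnorm x.
Proof. rewrite opp_scal, ax_norm_scal. rewrite (Rabs_left (-1)) by lra. ring. Qed.

Lemma norm0 : nnorm (@nzero X) = 0.
Proof. rewrite <- (scal0 nzero), ax_norm_scal, Rabs_R0; ring. Qed.

Lemma norm_nonneg x : 0 <= nnorm x.
Proof.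
  pose proof (ax_norm_triangle _ x (nopp x)). rewrite ax_add_opp, norm0, norm_opp in H. lra.
Qed.

Lemma nsub_sym x y : nsub y x = nopp (nsub x y).
Proof.
  apply opp_unique. unfold nsub.
  rewrite <- ax_add_assoc. rewrite (ax_add_assoc _ (nopp x) x (nopp y)).
  rewrite (ax_add_comm _ (nopp x) x), ax_add_opp, add0l, ax_add_opp. reflexivity.
Qed.

Lemma norm_sub_sym x y : nnorm (nsub y x) = nnorm (nsub x y).
Proof. rewrite nsub_sym, norm_opp; reflexivity. Qed.

Lemma nsub_chain x y z : nsub x z = nadd (nsub x y) (nsub y z).
Proof.
  unfold nsub. rewrite <- ax_add_assoc. rewrite (ax_add_assoc _ (nopp y) y (nopp z)).
  rewrite (ax_add_comm _ (nopp y) y), ax_add_opp, add0l. reflexivity.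
Qed.

Lemma norm_tri3 x y z : nnorm (nsub x z) <= nnorm (nsub x y) + nnorm (nsub y z).
Proof. rewrite (nsub_chain x y z). apply ax_norm_triangle. Qed.

Lemma dual_sub (xi : X -> R) x y : is_dual xi -> xi (nsub y x) = - xi (nsub x y).
Proof.
  intros [Ha _]. rewrite nsub_sym.
  assert (H0 : xi nzero = 0).
  { pose proof (Ha nzero nzero). rewrite ax_add_0 in H. lra. }
  pose proof (Ha (nopp (nsub x y)) (nsub x y)).
  rewrite ax_add_comm, ax_add_opp, H0 in H. lra.
Qed.
End NS.

Lemma conc_scale (phi : R -> R) u v :
  concave_on_nonneg phi -> phi 0 = 0 -> 0 < v <= u -> phi u * v <= u * phi v.
Proof.
  intros Hc H0 Huv.
  assert (Hu : 0 < u) by lra.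
  assert (Hl : 0 <= v / u <= 1).
  { split. apply Rlt_le, Rdiv_lt_0_compat; lra.
    apply (Rmult_le_reg_r u); [lra|]. unfold Rdiv; rewrite Rmult_assoc, Rinv_l; lra. }
  pose proof (Hc u 0 (v / u) ltac:(lra) ltac:(lra) Hl) as H.
  rewrite H0 in H. replace (v / u * u + (1 - v / u) * 0) with v in H by (field; lra).
  apply (Rmult_le_compat_l u) in H; [|lra].
  replace (u * (v / u * phi u + (1 - v / u) * 0)) with (phi u * v) in H by (field; lra).
  exact H.
Qed.

Lemma step_core r q aj d ds t t' theta (phi : R -> R) Phi :
  1 < r -> 0 < q < 1 -> 0 < aj -> 0 < d -> 0 < ds < d -> 0 <= Phi ->
  2 * d < t -> 0 <= t' -> t' <= 2 * d ->
  phi (t + d) * (d + ds) <= (t + d) * Phi ->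
  rpow t r <= rpow d r + aj * phi (t + d) ->
  theta <= rpow t' r / (aj * q) ->
  theta <= 3 * Rpower 2 r * Phi / q.
Proof.
  intros Hr Hq Ha Hd Hds HP Ht Ht' Ht'2 Hc Hmin Hth.
  set (e := Rpower d (r - 1)).
  assert (He : 0 < e) by apply Rpower_pos.
  assert (HP' : rpow d r = d * e) by (apply rpow_split; lra).
  assert (Htr : t * e <= rpow t r).
  { rewrite rpow_split by lra. apply Rmult_le_compat_l; [lra|].
    unfold e; apply Rle_Rpower_l; lra. }
  assert (Hkey : rpow d r <= 3 * aj * Phi).
  { assert (H0 : e * (t + d) <= 3 * (rpow t r - rpow d r)) by nra.
    assert (H1 : e * (t + d) * d <= 3 * (rpow t r - rpow d r) * (d + ds)).
    { apply Rle_trans with (3 * (rpow t r - rpow d r) * d). nra.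
      apply Rmult_le_compat_l; nra. }
    assert (H2 : 3 * (rpow t r - rpow d r) * (d + ds) <= 3 * aj * (t + d) * Phi) by nra.
    assert (H3 : (t + d) * rpow d r <= (t + d) * (3 * aj * Phi)) by nra.
    apply Rmult_le_reg_l in H3; lra. }
  assert (H2p : 0 < Rpower 2 r) by apply Rpower_pos.
  eapply Rle_trans; [exact Hth|].
  assert (rpow t' r <= Rpower 2 r * rpow d r).
  { rewrite <- rpow_2 by lra. apply rpow_mono; lra. }
  apply (Rmult_le_reg_r (aj * q)); [nra|].
  unfold Rdiv. rewrite Rmult_assoc, Rinv_l by nra.
  replace (3 * Rpower 2 r * Phi * / q * (aj * q)) with (Rpower 2 r * (3 * aj * Phi)) by (field; lra).
  nra.
Qed.

Lemma theta_bound r q a0 d ds theta Phi (phi : R -> R) (t : nat -> R) (J : nat) :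
  1 < r -> 0 < q < 1 -> 0 < a0 -> 0 < ds < d -> 0 <= Phi ->
  (forall k, 0 <= t k) ->
  (forall k, (k <= J)%nat -> rpow (t k) r <= rpow d r + a0 * q ^ k * phi (t k + d)) ->
  (forall k, theta <= rpow (t k) r / (a0 * q ^ k)) ->
  t J <= 2 * d ->
  (forall u, d + ds <= u -> phi u * (d + ds) <= u * Phi) ->
  theta <= Rpower 2 r * rpow d r / a0 + 3 * Rpower 2 r * Phi / q.
Proof.
  intros Hr Hq Ha Hds HP Ht Hmin Hth HJ Hc.
  assert (H2p : 0 < Rpower 2 r) by apply Rpower_pos.
  assert (Hb1 : 0 <= Rpower 2 r * rpow d r / a0).
  { pose proof (rpow_nonneg d r). apply Rmult_le_pos; [nra|]. left; apply Rinv_0_lt_compat; lra. }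
  assert (Hb2 : 0 <= 3 * Rpower 2 r * Phi / q).
  { apply Rmult_le_pos; [nra|]. left; apply Rinv_0_lt_compat; lra. }
  assert (Hind : forall m, (m <= J)%nat ->
     theta <= 3 * Rpower 2 r * Phi / q \/ t (J - m)%nat <= 2 * d).
  { induction m as [|m IH]; intros Hm.
    - right. replace (J - 0)%nat with J by lia. exact HJ.
    - destruct (IH ltac:(lia)) as [H|H]; [left; exact H|].
      destruct (Rle_lt_dec (t (J - S m)%nat) (2 * d)) as [H'|H']; [right; exact H'|].
      left. set (j := (J - S m)%nat) in *.
      replace (J - m)%nat with (S j) in H by (unfold j; lia).
      assert (Hqj : 0 < q ^ j) by (apply pow_lt; lra).
      apply (step_core r q (a0 * q ^ j) d ds (t j) (t (S j)) theta phi Phi); auto; try lra.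
      + apply Rmult_lt_0_compat; lra.
      + apply Hc. pose proof (Ht j); lra.
      + apply Hmin. unfold j; lia.
      + replace (a0 * q ^ j * q) with (a0 * q ^ S j) by (simpl; ring). apply Hth. }
  destruct (Hind J (le_n _)) as [H|H]; [lra|].
  replace (J - J)%nat with 0%nat in H by lia.
  eapply Rle_trans; [apply (Hth 0%nat)|].
  simpl. rewrite Rmult_1_r.
  assert (rpow (t 0%nat) r <= Rpower 2 r * rpow d r).
  { rewrite <- rpow_2 by lra. apply rpow_mono; [lra|]. split; [apply Ht|exact H]. }
  apply Rle_trans with (Rpower 2 r * rpow d r / a0); [|lra].
  unfold Rdiv. apply Rmult_le_compat_r; [left; apply Rinv_0_lt_compat; lra|exact H0].
Qed.

Lemma tik_le {X Y : NormedSpace} (F : X -> Y) Rf r a (z : Y) (x x' : X) b :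
  0 < a -> Rf x' = Fin b -> ext_le (tik F Rf r a z x) (tik F Rf r a z x') ->
  exists v, Rf x = Fin v /\
    rpow (nnorm (nsub (F x) z)) r + a * v <= rpow (nnorm (nsub (F x') z)) r + a * b.
Proof.
  intros Ha Hb H. unfold tik in H. rewrite Hb in H.
  destruct (Rf x) as [v|] eqn:E.
  - exists v; split; auto.
  - simpl in H. destruct (Req_EM_T a 0); [lra|]. simpl in H. contradiction.
Qed.

Lemma phi_mono (phi : R -> R) s t :
  (forall s t, 0 <= s -> s < t -> phi s < phi t) -> 0 <= s -> s <= t -> phi s <= phi t.
Proof.
  intros H Hs Hst. destruct (Req_dec s t); [subst; lra|]. left; apply H; lra.
Qed.

Theorem theorem2p1 :
  forall (alpha0 q r beta : R),
    0 < alpha0 -> 0 < q < 1 -> 1 < r -> 0 <= beta < 1 ->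
    exists C : R,
      forall (X Y : NormedSpace) (DF : X -> Prop) (F : X -> Y) (Rf : X -> ERbar)
             (y : Y) (xa : R -> Y -> X) (xd : X) (xi : X -> R) (phi : R -> R) (rho : R)
             (yt : Y) (astar : R),
        standing X Y DF F Rf r y xa ->
        R_minimizing DF F Rf y xd ->
        assumption_A1 DF F Rf xd xi beta phi rho ->
        HR_choice F xa r alpha0 q yt astar ->
        M_rho DF Rf rho (xa astar yt) ->
        let delta := nnorm (nsub yt y) in
        let dstar := nnorm (nsub (F (xa astar yt)) yt) in
        dstar <> 0 ->
        ext_le (bregman Rf xi (xa astar yt) xd)
               (Fin (C * (1 + rpow delta r / rpow dstar r) * (rpow delta r + phi (delta + dstar)))).
Proof.
  intros a0 q r beta Ha0 Hq Hr Hbeta.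
  set (K := Rpower 2 r / a0 + 3 * Rpower 2 r / q + 1).
  exists (K / (1 - beta)).
  intros X Y DF F Rf y xa xd xi phi rho yt astar Hst Hmin HA1 HHR HM delta dstar Hds.
  destruct Hst as [_ [_ [_ [_ [_ [_ [_ [_ [_ [_ [_ [_ Hxa]]]]]]]]]]]].
  destruct Hmin as [HDxd [HFxd _]].
  destruct HA1 as [[Hxid Hsub] [_ [[Hphi0 [Hphinn [Hphimono _]]] [Hconc [HRxd HA1x]]]]].
  destruct HHR as [[J HJ] Hth].
  destruct HM as [HDs HRs].
  destruct (Rf xd) as [A|] eqn:EA; [|simpl in HRxd; contradiction].
  set (xs := xa astar yt) in *.
  destruct (Rf xs) as [Rs|] eqn:ERs; [|simpl in HRs; contradiction].
  simpl in HRxd, HRs.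
  assert (Hast : 0 < astar) by (rewrite HJ; apply Rmult_lt_0_compat; [lra|apply pow_lt; lra]).
  assert (Hdel0 : 0 <= delta) by apply norm_nonneg.
  assert (Hds0 : 0 < dstar) by (pose proof (norm_nonneg _ (nsub (F xs) yt)); fold dstar in H; lra).
  assert (HFxdyt : nnorm (nsub (F xd) yt) = delta) by (rewrite HFxd; apply norm_sub_sym).
  assert (Hgen : forall al, astar <= al ->
    exists Ra, Rf (xa al yt) = Fin Ra /\
      rpow (nnorm (nsub (F (xa al yt)) yt)) r + al * Ra <= rpow delta r + al * A /\
      A - Ra <= phi (nnorm (nsub (F (xa al yt)) yt) + delta)).
  { intros al Hal.
    assert (Hal0 : 0 < al) by lra.
    destruct (Hxa al yt Hal0) as [HDal Hmal].
    destruct (tik_le F Rf r al yt (xa al yt) xd A Hal0 EA (Hmal xd HDxd)) as [Ra [ERa HRa]].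
    rewrite HFxdyt in HRa.
    exists Ra; split; [exact ERa|split; [exact HRa|]].
    assert (HRaRs : Ra <= Rs).
    { destruct (Req_dec al astar) as [->|Hne].
      - fold xs in ERa. rewrite ERs in ERa. injection ERa; lra.
      - destruct (tik_le F Rf r al yt (xa al yt) xs Rs Hal0 ERs (Hmal xs HDs)) as [Ra' [ERa' H1]].
        rewrite ERa in ERa'; injection ERa' as <-.
        destruct (Hxa astar yt Hast) as [_ Hms].
        destruct (tik_le F Rf r astar yt xs (xa al yt) Ra Hast ERa (Hms _ HDal)) as [Rs' [ERs' H2]].
        rewrite ERs in ERs'; injection ERs' as <-.
        fold dstar in H1, H2. nra. }
    assert (HMal : M_rho DF Rf rho (xa al yt)) by (split; [exact HDal|rewrite ERa; simpl; lra]).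
    pose proof (HA1x _ HMal) as H1. unfold bregman in H1. rewrite ?ERa, ?EA in H1. simpl in H1.
    pose proof (Hsub (xa al yt)) as H2. rewrite ?EA, ?ERa in H2. simpl in H2.
    rewrite (dual_sub _ xi (xa al yt) xd Hxid) in H1.
    assert (Hn : phi (nnorm (nsub (F (xa al yt)) (F xd))) <= phi (nnorm (nsub (F (xa al yt)) yt) + delta)).
    { apply phi_mono; auto. apply norm_nonneg. rewrite HFxd. apply norm_tri3. }
    nra. }
  destruct (Hgen astar (Rle_refl _)) as [Rs' [ERs' [H1 _]]].
  fold xs in ERs'. rewrite ERs in ERs'. injection ERs' as <-. fold dstar in H1.
  assert (HMs : M_rho DF Rf rho xs) by (split; [exact HDs|rewrite ERs; simpl; lra]).
  pose proof (HA1x _ HMs) as H2. unfold bregman in H2 |- *. rewrite ?ERs, ?EA in H2 |- *. simpl in H2 |- *.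
  rewrite (dual_sub _ xi xs xd Hxid) in H2.
  assert (Hn : phi (nnorm (nsub (F xs) (F xd))) <= phi (delta + dstar)).
  { apply phi_mono; auto. apply norm_nonneg. rewrite HFxd. rewrite Rplus_comm. apply norm_tri3. }
  set (P := rpow delta r) in *. set (SS := rpow dstar r) in *.
  set (Phi := phi (delta + dstar)) in *.
  change (rpow (nnorm (nsub (F (xa astar yt)) yt)) r) with SS in H1.
  set (g := xi (nsub xs xd)) in *.
  assert (HP0 : 0 <= P) by apply rpow_nonneg.
  assert (HS0 : 0 < SS) by (unfold SS; rewrite rpow_posE by lra; apply Rpower_pos).
  assert (HPhi0 : 0 <= Phi) by (apply Hphinn; lra).
  assert (HPS : 0 <= P / SS) by (apply Rmult_le_pos; [lra|left; apply Rinv_0_lt_compat; lra]).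
  assert (H2p : 0 < Rpower 2 r) by apply Rpower_pos.
  assert (HK1 : 1 <= K).
  { unfold K. assert (0 <= Rpower 2 r / a0) by (apply Rmult_le_pos; [lra|left; apply Rinv_0_lt_compat; lra]).
    assert (0 <= 3 * Rpower 2 r / q) by (apply Rmult_le_pos; [lra|left; apply Rinv_0_lt_compat; lra]).
    lra. }
  assert (HD : (1 - beta) * (Rs - A - g) <= (P - SS) / astar + Phi).
  { assert (Hq1 : Rs - A <= (P - SS) / astar).
    { apply (Rmult_le_reg_l astar); [lra|]. unfold Rdiv.
      replace (astar * ((P - SS) * / astar)) with (P - SS) by (field; lra). lra. }
    idtac. lra. }
  assert (Hmain : (P - SS) / astar <= P / SS * (K * (P + Phi))).
  { destruct (Rle_lt_dec P SS) as [HPS'|HPS'].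
    - apply Rle_trans with 0.
      + unfold Rdiv. assert (0 < / astar) by (apply Rinv_0_lt_compat; lra). nra.
      + apply Rmult_le_pos; [lra|]. apply Rmult_le_pos; lra.
    - assert (Hdd : dstar < delta).
      { destruct (Rle_lt_dec delta dstar); [|lra].
        exfalso. assert (P <= SS) by (apply rpow_mono; lra). lra. }
      assert (Htheta : SS / astar <= Rpower 2 r * P / a0 + 3 * Rpower 2 r * Phi / q).
      { apply (theta_bound r q a0 delta dstar (SS / astar) Phi phi
                 (fun k => nnorm (nsub (F (xa (a0 * q ^ k) yt)) yt)) J); auto; try lra.
        - intros k; apply norm_nonneg.
        - intros k Hk.
          assert (Hal : astar <= a0 * q ^ k).
          { rewrite HJ. apply Rmult_le_compat_l; [lra|].
            replace J with (k + (J - k))%nat by lia. rewrite pow_add.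
            pose proof (pow_lt q k ltac:(lra)).
            assert (q ^ (J - k) <= 1) by (destruct (J - k)%nat as [|n]; [simpl; lra|pose proof (pow_lt_1_compat q (Datatypes.S n) ltac:(lra) ltac:(lia)); lra]). nra. }
          destruct (Hgen _ Hal) as [Ra [_ [Ha Hb]]]. cbv beta. assert (0 < a0 * q ^ k) by (apply Rmult_lt_0_compat; [lra|apply pow_lt; lra]). fold P. pose proof (Rmult_le_compat_l _ _ _ (Rlt_le _ _ H) Hb). nra.
        - rewrite <- HJ. change (dstar <= 2 * delta). lra.
        - intros u Hu. apply conc_scale; auto. lra. }
      assert (Hb : Rpower 2 r * P / a0 + 3 * Rpower 2 r * Phi / q <= K * (P + Phi)).
      { unfold K, Rdiv.
        assert (0 <= Rpower 2 r * / a0) by (apply Rmult_le_pos; [lra|left; apply Rinv_0_lt_compat; lra]).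
        assert (0 <= 3 * Rpower 2 r * / q) by (apply Rmult_le_pos; [lra|left; apply Rinv_0_lt_compat; lra]).
        nra. }
      apply Rle_trans with (P / astar).
      + unfold Rdiv. apply Rmult_le_compat_r; [left; apply Rinv_0_lt_compat; lra|lra].
      + replace (P / astar) with (P / SS * (SS / astar)) by (field; lra).
        apply Rmult_le_compat_l; lra. }
  assert (Hfin : (1 - beta) * (Rs - A - g) <= K * (1 + P / SS) * (P + Phi)) by nra.
  apply (Rmult_le_reg_l (1 - beta)); [lra|].
  replace ((1 - beta) * (K / (1 - beta) * (1 + P / SS) * (P + Phi))) with (K * (1 + P / SS) * (P + Phi))
    by (field; lra).
  exact Hfin.
Qed.
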